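(* For the problem $P2\|C_{\max}$ with $n$ jobs, starting from any schedule, the total number of improving iterations (each replacing the current schedule by an improving 2-swap neighbor) before a 2-swap optimal solution is reached is $O(n^4)$.
   Context: Problem $P2\|C_{\max}$: $n$ jobs with processing times $p_j>0$, two identical machines. A schedule $\sigma=(M_1,M_2)$ partitions the jobs into the sets processed on machines 1 and 2; loads $L_i=\sum_{j\in M_i}p_j$, makespan $\max_iL_i$. A 2-swap neighbor is obtained by choosing $k'$ jobs on one machine and $k''$ jobs on the other with $k'+k''\le 2$ and interchanging their machine assignments (so it covers moving one job, moving two jobs, or exchanging two jobs on different machines). It is improving if its makespan is strictly smaller than the current makespan. A schedule is 2-swap optimal if it has no improving 2-swap neighbor. *)

(* Defs.v *)
From mathcomp Require Import all_boot all_order all_algebra.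
Set Implicit Arguments. Unset Strict Implicit. Unset Printing Implicit Defensive.
Import Order.TTheory GRing.Theory Num.Theory.
Local Open Scope ring_scope.

(* A schedule of n jobs on two identical machines: job j is on machine 1
   iff sigma j = true, and on machine 2 iff sigma j = false. *)
Definition schedule (n : nat) := {ffun 'I_n -> bool}.

Section P2Cmax.
Variables (R : realFieldType) (n : nat) (p : 'I_n -> R).

Definition load (sigma : schedule n) (b : bool) : R :=
  \sum_(j < n | sigma j == b) p j.

Definition makespan (sigma : schedule n) : R :=
  Num.max (load sigma true) (load sigma false).

Definition swap_set (sigma : schedule n) (S : {set 'I_n}) : schedule n :=
  [ffun j => if j \in S then ~~ sigma j else sigma j].

(* 2-swap neighbor: choose k' jobs on one machine and k'' on the other with
   k' + k'' <= 2 (i.e. a set S of at most 2 jobs) and interchange them. *)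
Definition two_swap_neighbor (sigma sigma' : schedule n) : Prop :=
  exists S : {set 'I_n}, (#|S| <= 2)%N /\ sigma' = swap_set sigma S.

Definition improving_two_swap (sigma sigma' : schedule n) : Prop :=
  two_swap_neighbor sigma sigma' /\ makespan sigma' < makespan sigma.

Definition two_swap_optimal (sigma : schedule n) : Prop :=
  forall sigma', ~ improving_two_swap sigma sigma'.

End P2Cmax.

(* Main.v *)
Require Import Defs.
From mathcomp Require Import all_boot all_order all_algebra.
From mathcomp Require Import zify ring lra.
Import Order.TTheory GRing.Theory Num.Theory.
Set Implicit Arguments. Unset Strict Implicit.
Local Open Scope ring_scope.

Section Aux.
Variable R : realFieldType.

Lemma abs_cases (x : R) : (0 <= x /\ `|x| = x) \/ (x < 0 /\ `|x| = - x).
Proof.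
case: (lerP 0 x) => h; [left; split => //; exact: ger0_norm|right; split => //; exact: ltr0_norm].
Qed.

Ltac ac x := case: (abs_cases x) => [[? ->]|[? ->]].

Lemma R1 (D e : R) : `|D - 2 * e| < `|D| -> 0 < D -> 0 < e.
Proof. ac D; ac (D - 2 * e); move=> *; lra. Qed.

Lemma R2 (D e : R) : `|D - 2 * e| < `|D| -> ~~ (0 < D) -> e < 0.
Proof. rewrite -leNgt. ac D; ac (D - 2 * e); move=> *; lra. Qed.

Lemma R3 (D e : R) : `|D - 2 * e| < `|D| -> `|e| < `|D|.
Proof. ac D; ac (D - 2 * e); ac e; move=> *; lra. Qed.

Lemma R4 (D e : R) : `|D - 2 * e| < `|D| -> (0 < D) != (0 < D - 2 * e) ->
  ~~ (`|e| < `|D - 2 * e|).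
Proof.
rewrite -leNgt.
case: (lerP D 0) => h1; case: (lerP (D - 2 * e) 0) => h2 //=;
  ac D; ac (D - 2 * e); ac e; move=> *; lra.
Qed.

Lemma Rmax (a b a' b' : R) : a + b = a' + b' -> Num.max a' b' < Num.max a b ->
  `|a' - b'| < `|a - b|.
Proof.
rewrite !maxEle; case: ifP => h1; case: ifP => h2;
  ac (a - b); ac (a' - b'); move=> *; lra.
Qed.

Variables (n : nat) (p : 'I_n -> R).
Hypothesis pos : forall j, 0 < p j.

Definition Dif (s : schedule n) : R := load p s true - load p s false.
Definition sg (s : schedule n) j : R := if s j then p j else - p j.
Definition ee (s : schedule n) (S : {set 'I_n}) : R := \sum_(j in S) sg s j.

Lemma loadT s : load p s true + load p s false = \sum_j p j.
Proof.
rewrite /load [RHS](bigID (fun j => s j == true)) /=; congr (_ + _).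
by apply: eq_bigl => j; case: (s j).
Qed.

Lemma DifE s : Dif s = \sum_j sg s j.
Proof.
rewrite /Dif /load !(big_mkcond (fun j => s j == _)) -sumrB.
by apply: eq_bigr => j _; rewrite /sg; case: (s j) => /=; rewrite ?subr0 ?sub0r.
Qed.

Lemma Dif_swap s S : Dif (swap_set s S) = Dif s - 2 * ee s S.
Proof.
rewrite !DifE /ee (bigID (fun j => j \in S)) [X in _ = X - _](bigID (fun j => j \in S)) /=.
have -> : \sum_(i | i \in S) sg (swap_set s S) i = - \sum_(i | i \in S) sg s i.
  rewrite -sumrN; apply: eq_bigr => j jS; rewrite /sg ffunE jS; case: (s j) => //=.
  by rewrite opprK.
have -> : \sum_(i | i \notin S) sg (swap_set s S) i = \sum_(i | i \notin S) sg s i.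
  by apply: eq_bigr => j jS; rewrite /sg ffunE (negbTE jS).
ring.
Qed.

Lemma improving_abs s s' S : s' = swap_set s S ->
  makespan p s' < makespan p s -> `|Dif s - 2 * ee s S| < `|Dif s|.
Proof.
move=> -> h; rewrite -Dif_swap; apply: Rmax h.
by rewrite !loadT.
Qed.

Definition rank (j : 'I_n) : nat := #|[set i | p i <= p j]|.

Lemma rank_lt i j : p i < p j -> (rank i < rank j)%N.
Proof.
move=> h; apply: proper_card; apply/properP; split.
  apply/subsetP => x; rewrite !inE => hx; exact: le_trans hx (ltW h).
by exists j; rewrite !inE ?lexx // -ltNge.
Qed.

Lemma rank_gt0 j : (0 < rank j)%N.
Proof. by apply/card_gt0P; exists j; rewrite inE. Qed.

Lemma rank_le j : (rank j <= n)%N.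
Proof. by rewrite /rank -[X in (_ <= X)%N]card_ord; apply: max_card. Qed.

Lemma small_set (S : {set 'I_n}) : (#|S| <= 2)%N ->
  [\/ S = set0, exists a, S = [set a] | exists a b, a != b /\ S = [set a; b]].
Proof.
case: (ltngtP #|S| 1) => h hS.
- by apply: Or31; apply: cards0_eq; lia.
- by apply: Or33; apply/cards2P; apply/eqP; lia.
- by apply: Or32; apply/cards1P/eqP.
Qed.

Lemma comb (S : {set 'I_n}) (q : 'I_n -> bool) : (#|S| <= 2)%N ->
  0 < \sum_(j in S) (if q j then p j else - p j) ->
  (\sum_(j in S) (if q j then 0 else rank j) < \sum_(j in S) (if q j then rank j else 0))%N.
Proof.
case/small_set => [->|[a ->]|[a [b [ab ->]]]].
- by rewrite !big_set0 ltxx.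
- rewrite !big_set1; case: (q a) => h; first exact: rank_gt0.
  have := pos a; lra.
- have nab : a \notin [set b] by rewrite inE.
  rewrite !big_setU1 //= !big_set1.
  case: (q a); case: (q b) => h.
  + have := rank_gt0 a; lia.
  + rewrite add0n addn0; apply: rank_lt; lra.
  + rewrite add0n addn0; apply: rank_lt; lra.
  + have := pos a; have := pos b; lra.
Qed.


Definition X := (option ('I_n * bool) * option ('I_n * bool))%type.
Definition val (o : option ('I_n * bool)) : R :=
  if o is Some (j, b) then (if b then p j else - p j) else 0.
Definition fX (x : X) : R := `|val x.1 + val x.2|.
Definition Aset s := [set x : X | fX x < `|Dif s|].
Definition crit s := 0 < Dif s.
Definition rsc c (s : schedule n) := (\sum_j (if s j == c then rank j else 0))%N.
Definition Phi s := (#|Aset s| * (n * n + 1) + rsc (crit s) s)%N.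

Lemma ex_x s (S : {set 'I_n}) : (#|S| <= 2)%N -> exists x : X, fX x = `|ee s S|.
Proof.
rewrite /ee /fX; case/small_set => [->|[a ->]|[a [b [ab ->]]]].
- by exists (None, None); rewrite big_set0 /= addr0.
- by exists (Some (a, s a), None); rewrite big_set1 /= addr0.
- have nab : a \notin [set b] by rewrite inE.
  by exists (Some (a, s a), Some (b, s b)); rewrite big_setU1 //= big_set1.
Qed.

Lemma rs_swap s (S : {set 'I_n}) c : (rsc c (swap_set s S) + \sum_(j in S) (if s j == c then rank j else 0)
  = rsc c s + \sum_(j in S) (if s j == c then 0 else rank j))%N.
Proof.
rewrite /rsc (bigID (fun j => j \in S) xpredT (fun j => if swap_set s S j == c then rank j else 0)%N).
rewrite (bigID (fun j => j \in S) xpredT (fun j => if s j == c then rank j else 0)%N) /=.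
have -> : (\sum_(i | i \in S) (if swap_set s S i == c then rank i else 0)
   = \sum_(i | i \in S) (if s i == c then 0 else rank i))%N.
  by apply: eq_bigr => j jS; rewrite ffunE jS; case: (s j); case: c.
have -> : (\sum_(i | i \notin S) (if swap_set s S i == c then rank i else 0)
   = \sum_(i | i \notin S) (if s i == c then rank i else 0))%N.
  by apply: eq_bigr => j jS; rewrite ffunE (negbTE jS).
by rewrite addnAC [RHS]addnAC addnC [RHS]addnC [in X in (_ + X)%N]addnC.
Qed.

Lemma rsc_le c s : (rsc c s <= n * n)%N.
Proof.
rewrite /rsc -[X in (X * _)%N]card_ord -sum_nat_const; apply: leq_sum => j _.
by case: ifP => _ //; exact: rank_le.
Qed.

Lemma step s s' : improving_two_swap p s s' -> (Phi s' < Phi s)%N.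
Proof.
case=> [[S [hS ->]] hmk].
have habs : `|Dif s - 2 * ee s S| < `|Dif s| by apply: improving_abs hmk.
set D := Dif s in habs; set e := ee s S in habs.
have hD' : Dif (swap_set s S) = D - 2 * e by rewrite Dif_swap.
have [x0 hx0] := ex_x s hS.
have hsub : Aset (swap_set s S) \subset Aset s.
  apply/subsetP => x; rewrite !inE hD' => h; exact: lt_trans h habs.
have hx0in : x0 \in Aset s by rewrite inE hx0; exact: R3 habs.
rewrite /Phi.
case: (boolP (crit (swap_set s S) == crit s)) => hc.
- rewrite (eqP hc).
  have hpos : 0 < \sum_(j in S) (if s j == crit s then p j else - p j).
    rewrite /crit -/D; case: (boolP (0 < D)) => hDp.
    + have -> : \sum_(j in S) (if s j == true then p j else - p j) = e.
        by apply: eq_bigr => j _; rewrite /sg; case: (s j).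
      exact: R1 habs hDp.
    + have -> : \sum_(j in S) (if s j == false then p j else - p j) = - e.
        rewrite /e /ee -sumrN; apply: eq_bigr => j _; rewrite /sg; case: (s j) => //=.
        by rewrite opprK.
      have := R2 habs hDp; lra.
  have hc1 := comb hS hpos.
  have hr := rs_swap s S (crit s).
  have hA := subset_leq_card hsub.
  have hm := leq_mul hA (leqnn (n * n + 1)).
  lia.
- have hprop : Aset (swap_set s S) \proper Aset s.
    apply/properP; split => //; exists x0 => //.
    rewrite inE hD' hx0 -/e; refine (R4 habs _).
    by move: hc; rewrite /crit hD' -/D eq_sym.
  have hA := proper_card hprop.
  have hm := leq_mul hA (leqnn (n * n + 1)).
  have h1 := rsc_le (crit (swap_set s S)) (swap_set s S).
  lia.
Qed.

End Aux.

Theorem theorem4 :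
  exists C : nat,
  forall (R : realFieldType) (n : nat) (p : 'I_n -> R),
    (forall j, 0 < p j) ->
    forall (s : nat -> schedule n) (k : nat),
      (forall i, (i < k)%N -> improving_two_swap p (s i) (s i.+1)) ->
      (k <= C * n ^ 4)%N.
Proof.
exists 19%N => R n p pos s k hk.
have hind : forall i, (i <= k)%N -> (i + Phi p (s i) <= Phi p (s 0))%N.
  elim=> [|i IH] hi //.
  have := step pos (hk i hi); have := IH (ltnW hi); lia.
have h0 := hind k (leqnn k).
have hPhi : (Phi p (s 0) <= 19 * n ^ 4)%N.
  rewrite /Phi.
  case: n p pos s hk hind h0 => [|m] p pos s hk hind h0.
    have -> : Aset p (s 0) = set0.
      apply/setP => x; rewrite !inE /Dif /load !big_ord0 subrr normr0.
      by rewrite ltNge normr_ge0.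
    rewrite cards0 /rsc big_ord0; done.
  have hA : (#|Aset p (s 0)| <= (m.+1 * 2).+1 * (m.+1 * 2).+1)%N.
    apply: leq_trans (max_card _) _.
    by rewrite card_prod !card_option card_prod card_ord card_bool.
  have hr := rsc_le p (crit p (s 0)) (s 0).
  have hm := leq_mul hA (leqnn (m.+1 * m.+1 + 1)).
  set N := m.+1 in hA hr hm *.
  have hN : (1 <= N)%N by [].
  have -> : (N ^ 4 = (N * N) * (N * N))%N by rewrite !expnS expn0; lia.
  set M := (N * N)%N in hr hm *.
  have hNM : (N <= M)%N by rewrite /M; nia.
  have h9 : ((N * 2).+1 * (N * 2).+1 <= 9 * M)%N by rewrite /M; nia.
  have h2 : (M + 1 <= 2 * M)%N by nia.
  have h3 := leq_mul h9 h2.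
  have hM1 : (1 <= M)%N by rewrite /M; nia.
  have hMM : (M <= M * M)%N by rewrite -{1}[M]muln1 leq_mul2l hM1 orbT.
  clearbody M.
  have e18 : (9 * M * (2 * M) = 18 * (M * M))%N by nia.
  rewrite e18 in h3.
  rewrite (_ : 19 * (M * M) = 18 * (M * M) + M * M)%N; last lia.
  apply: leq_add; [exact: leq_trans hm h3 | exact: leq_trans hr hMM].
lia.
Qed.
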